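(* Let $R$ be a commutative domain, $B=R(t,\sigma,H,J)$, $M$ an $R$-weight $B$-module, $\mathfrak m\in\operatorname{Maxspec}(R)$ and $0\neq w\in M_{\mathfrak m}$. If $B_1w=0$ then $\sigma(\mathfrak m)\in\mathcal S(B)$. If $B_{-1}w=0$ then $\mathfrak m\in\mathcal S(B)$.
   Context: $\Bbbk$ is a field; all algebras are associative unital $\Bbbk$-algebras. For an algebra $R$ and $\sigma\in\operatorname{Aut}_\Bbbk(R)$, $R[t,t^{-1};\sigma]$ is the skew Laurent ring: generated over $R$ by $t,t^{-1}$ with $tt^{-1}=t^{-1}t=1$ and $t^{\pm1}r=\sigma^{\pm1}(r)t^{\pm1}$ for $r\in R$. Given two-sided ideals $H,J$ of $R$, set $I^{(0)}=R$, $I^{(n)}=J\sigma(J)\cdots\sigma^{n-1}(J)$ for $n\ge1$, and $I^{(n)}=\sigma^{-1}(H)\sigma^{-2}(H)\cdots\sigma^{n}(H)$ for $n\le-1$; it is assumed throughout that $I^{(n)}\neq0$ for all $n\in\mathbb Z$. The Bell–Rogalski (BR) algebra is $R(t,\sigma,H,J)=\bigoplus_{n\in\mathbb Z}I^{(n)}t^n\subseteq R[t,t^{-1};\sigma]$; write $B_n=I^{(n)}t^n$. For $R$ commutative, $\mathcal S(B)=\{\mathfrak p\in\operatorname{Spec}(R):\mathfrak p\supseteq HJ\}$. For $R$ a commutative domain, a left $B$-module $M$ is an $R$-weight module if $M=\bigoplus_{\mathfrak m\in\operatorname{Maxspec}(R)}M_{\mathfrak m}$ where $M_{\mathfrak m}=\{v\in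 M:\mathfrak m v=0\}$ and $\dim_{R/\mathfrak m}M_{\mathfrak m}<\infty$ for all $\mathfrak m$. *)

(* Defs.v *)
From HB Require Import structures.
From mathcomp Require Import all_boot all_order all_algebra.
Set Implicit Arguments. Unset Strict Implicit. Unset Printing Implicit Defensive.
Import GRing.Theory.
Local Open Scope ring_scope.

Section Defs.
Variable R : comNzRingType.

Definition is_ideal (I : R -> Prop) : Prop :=
  [/\ I 0, (forall x y, I x -> I y -> I (x + y)) & (forall r x, I x -> I (r * x))].

Definition sub_ideal (I K : R -> Prop) : Prop := forall x, I x -> K x.

Definition is_prime_ideal (P : R -> Prop) : Prop :=
  [/\ is_ideal P, ~ P 1 & forall a b, P (a * b) -> P a \/ P b].

Definition is_maximal_ideal (m : R -> Prop) : Prop :=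
  [/\ is_ideal m, ~ m 1 &
     forall I, is_ideal I -> sub_ideal m I -> (forall x, I x <-> m x) \/ I 1].

Definition idealMul (I K : R -> Prop) : R -> Prop :=
  fun x => exists n (a b : 'I_n -> R),
    (forall i, I (a i)) /\ (forall i, K (b i)) /\ x = \sum_(i < n) a i * b i.

Definition img (f : R -> R) (I : R -> Prop) : R -> Prop :=
  fun x => exists y, I y /\ x = f y.

Definition fullR : R -> Prop := fun _ => True.

Definition spow (s sinv : R -> R) (n : int) : R -> R :=
  match n with
  | Posz k => fun x => iter k s x
  | Negz k => fun x => iter k.+1 sinv x
  end.

(* Jprod k = J sigma(J) ... sigma^k(J)   (= I^(k+1)) *)
Fixpoint Jprod (s sinv : R -> R) (J : R -> Prop) (k : nat) : R -> Prop :=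
  match k with
  | 0 => img (spow s sinv 0) J
  | k'.+1 => idealMul (Jprod s sinv J k') (img (spow s sinv (Posz k)) J)
  end.

(* Hprod k = sigma^-1(H) sigma^-2(H) ... sigma^-(k+1)(H)   (= I^(-(k+1))) *)
Fixpoint Hprod (s sinv : R -> R) (H : R -> Prop) (k : nat) : R -> Prop :=
  match k with
  | 0 => img (spow s sinv (Negz 0)) H
  | k'.+1 => idealMul (Hprod s sinv H k') (img (spow s sinv (Negz k)) H)
  end.

Definition Iseq (s sinv : R -> R) (H J : R -> Prop) (n : int) : R -> Prop :=
  match n with
  | Posz 0 => fullR
  | Posz k'.+1 => Jprod s sinv J k'
  | Negz k => Hprod s sinv H k
  end.

Definition in_SB (H J : R -> Prop) (P : R -> Prop) : Prop :=
  is_prime_ideal P /\ sub_ideal (idealMul H J) P.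

(* A left module over B = R(t,sigma,H,J), described by the action of the
   homogeneous elements r t^n (r in I^(n)): act n r v = (r t^n) . v.
   Since B = (+)_n I^(n) t^n, this data is exactly a B-module structure. *)
Definition BR_module (M : zmodType) (s sinv : R -> R) (H J : R -> Prop)
  (act : int -> R -> M -> M) : Prop :=
  [/\ (forall n r r' v, Iseq s sinv H J n r -> Iseq s sinv H J n r' ->
         act n (r + r') v = act n r v + act n r' v),
      (forall n r v v', Iseq s sinv H J n r ->
         act n r (v + v') = act n r v + act n r v'),
      (forall n m r r' v, Iseq s sinv H J n r -> Iseq s sinv H J m r' ->
         act n r (act m r' v) = act (n + m) (r * spow s sinv n r') v)
    & (forall v, act 0 1 v = v)].

Definition weight_space (M : zmodType) (act : int -> R -> M -> M)
  (m : R -> Prop) (v : M) : Prop := forall r, m r -> act 0 r v = 0.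

(* R-weight module: M = (+)_{m maximal} M_m, each M_m finite dimensional
   over R/m (equivalently, finitely generated as an R-module). *)
Definition weight_module (M : zmodType) (act : int -> R -> M -> M) : Prop :=
  [/\ (forall v : M, exists n (ms : 'I_n -> (R -> Prop)) (vs : 'I_n -> M),
         injective ms /\
         (forall i, is_maximal_ideal (ms i) /\ weight_space act (ms i) (vs i)) /\
         v = \sum_(i < n) vs i),
      (forall n (ms : 'I_n -> (R -> Prop)) (vs : 'I_n -> M),
         injective ms ->
         (forall i, is_maximal_ideal (ms i) /\ weight_space act (ms i) (vs i)) ->
         \sum_(i < n) vs i = 0 -> forall i, vs i = 0)
    & (forall m, is_maximal_ideal m ->
         exists n (gs : 'I_n -> M),
           (forall i, weight_space act m (gs i)) /\
           forall v, weight_space act m v ->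
             exists cs : 'I_n -> R, v = \sum_(i < n) act 0 (cs i) (gs i))].

End Defs.

Definition is_k_aut (k : fieldType) (R : comAlgType k) (s sinv : R -> R) : Prop :=
  (forall x y, s (x + y) = s x + s y) /\
  (forall x y, s (x * y) = s x * s y) /\
  s 1 = 1 /\
  (forall (c : k) x, s (c *: x) = c *: s x) /\
  cancel s sinv /\ cancel sinv s.

(* Main.v *)
Require Import Defs.
From HB Require Import structures.
From Stdlib Require Import Classical.
From mathcomp Require Import ring.
From mathcomp Require Import all_boot all_order all_algebra.
Import GRing.Theory.
Local Open Scope ring_scope.

Lemma ideal_sum (R : comNzRingType) (P : R -> Prop) (HP : is_ideal P) n (f : 'I_n -> R) :
  (forall i, P (f i)) -> P (\sum_(i < n) f i).
Proof.
case: HP => P0 PD PM Hf; apply: (big_ind P) => //; move=> i _; exact: Hf.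
Qed.

Lemma max_prime (R : comNzRingType) (m : R -> Prop) :
  is_maximal_ideal m -> is_prime_ideal m.
Proof.
case=> [[m0 mD mM] m1 mmax]; split; [by split | done |].
move=> a b mab.
case: (classic (m a)) => [ma|nma]; first by left.
right.
pose I := fun x : R => exists r y, m y /\ x = r * a + y.
have II : is_ideal I.
  split.
  - by exists 0, 0; split => //; rewrite mul0r add0r.
  - move=> x y [r1 [y1 [my1 ->]]] [r2 [y2 [my2 ->]]].
    exists (r1 + r2), (y1 + y2); split; first exact: mD.
    by rewrite mulrDl -!addrA; congr (_ + _); rewrite addrCA.
  - move=> r x [r1 [y1 [my1 ->]]]; exists (r * r1), (r * y1); split; first exact: mM.
    by rewrite mulrDr mulrA.
have sub : sub_ideal m I by move=> x mx; exists 0, x; rewrite mul0r add0r.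
case: (mmax I II sub) => [eqI|[r [y [my e]]]].
  exfalso; apply: nma; apply/eqI; exists 1, 0; split => //; by rewrite mul1r addr0.
have -> : b = r * (a * b) + b * y by rewrite -[LHS]mulr1 e; ring.
apply: mD; first exact: mM.
exact: mM.
Qed.

Section S.
Variables (k : fieldType) (R : comAlgType k) (s sinv : R -> R).
Hypothesis Hs : is_k_aut s sinv.

Lemma sinvD x y : sinv (x + y) = sinv x + sinv y.
Proof.
case: Hs => sD [sM [s1 [_ [sK sinvK]]]].
by rewrite -{1}(sinvK x) -{1}(sinvK y) -sD sK.
Qed.
Lemma sinvM x y : sinv (x * y) = sinv x * sinv y.
Proof.
case: Hs => sD [sM [s1 [_ [sK sinvK]]]].
by rewrite -{1}(sinvK x) -{1}(sinvK y) -sM sK.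
Qed.
Lemma sinv0 : sinv 0 = 0.
Proof. have h := sinvD 0 0; rewrite addr0 in h. by apply: (addrI (sinv 0)); rewrite addr0 -h. Qed.
Lemma s0 : s 0 = 0.
Proof.
case: Hs => sD [sM [s1 [_ [sK sinvK]]]].
have h := sD 0 0; rewrite addr0 in h. by apply: (addrI (s 0)); rewrite addr0 -h.
Qed.

Lemma img_prime (m : R -> Prop) : is_prime_ideal m -> is_prime_ideal (img s m).
Proof.
case: Hs => sD [sM [s1 [_ [sK sinvK]]]].
case=> [[m0 mD mM] m1 mp]; split.
- split.
  + by exists 0; rewrite s0.
  + move=> x y [x' [mx ->]] [y' [my ->]]; exists (x' + y'); split; [exact: mD|by rewrite sD].
  + move=> r x [x' [mx ->]]; exists (sinv r * x'); split; first exact: mM.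
    by rewrite sM sinvK.
- move=> [y [my e]]; apply: m1.
  have y1 : y = 1 by rewrite -(sK y) -e -{1}s1 sK.
  by rewrite -y1.
- move=> a b [y [my e]].
  have : m (sinv a * sinv b) by rewrite -sinvM e sK.
  case/mp => h; [left; exists (sinv a)|right; exists (sinv b)]; by rewrite sinvK.
Qed.
End S.

Lemma spowN1 (R : comNzRingType) (s sinv : R -> R) x : spow s sinv (-1) x = sinv x.
Proof. rewrite -(NegzE 0). reflexivity. Qed.
Lemma spow1 (R : comNzRingType) (s sinv : R -> R) x : spow s sinv 1 x = s x.
Proof. reflexivity. Qed.

Arguments max_prime {R m}.
Arguments ideal_sum {R P}.
Arguments img_prime {k R s sinv} Hs {m}.
Arguments sinvD {k R s sinv} Hs.
Arguments sinvM {k R s sinv} Hs.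
Arguments sinv0 {k R s sinv} Hs.

Theorem corollary3p2 (k : fieldType) (R : comAlgType k)
  (Rdom : forall a b : R, a * b = 0 -> a = 0 \/ b = 0)
  (s sinv : R -> R) (Hs : is_k_aut s sinv)
  (H J : R -> Prop) (HH : is_ideal H) (HJ : is_ideal J)
  (Inz : forall n : int, exists x, Iseq s sinv H J n x /\ x <> 0)
  (M : zmodType) (act : int -> R -> M -> M)
  (HM : BR_module s sinv H J act) (Hw : weight_module act)
  (m : R -> Prop) (Hm : is_maximal_ideal m)
  (w : M) (Hwm : weight_space act m w) (Hw0 : w <> 0) :
  ((forall r, Iseq s sinv H J 1 r -> act 1 r w = 0) -> in_SB H J (img s m)) /\
  ((forall r, Iseq s sinv H J (-1) r -> act (-1) r w = 0) -> in_SB H J m).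
Proof.
have Hs' := Hs.
case: Hs' => sD [sM [s1 [_ [sK sinvK]]]].
case: HM => aD aV aC a1.
have act0v n r : Iseq s sinv H J n r -> act n r 0 = 0.
  move=> Ir; have h := aV n r 0 0 Ir; rewrite addr0 in h.
  by apply: (addrI (act n r 0)); rewrite addr0 -h.
pose Ann := fun a : R => act 0 a w = 0.
have IAnn : is_ideal Ann.
  split.
  - have h := aD 0 0 0 w I I; rewrite addr0 in h.
    by apply: (addrI (act 0 0 w)); rewrite addr0 -h.
  - by move=> x y; rewrite /Ann aD // => -> ->; rewrite addr0.
  - move=> r x; rewrite /Ann => Ax.
    have := aC 0 0 r x w I I; rewrite Ax (act0v 0 r I) => e.
    by rewrite /Ann e.
have mAnn : forall x, Ann x -> m x.
  case: Hm => _ _ mmax.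
  case: (mmax Ann IAnn Hwm) => [e x /e //|A1].
  by exfalso; apply: Hw0; rewrite -(a1 w).
have Hm' := max_prime Hm.
split.
- move=> B1; split; first exact: (img_prime Hs Hm').
  move=> x [n [a [b [Ha [Hb ->]]]]].
  exists (sinv (\sum_(i < n) a i * b i)); split; last by rewrite sinvK.
  apply: mAnn.
  rewrite (big_morph sinv (sinvD Hs) (sinv0 Hs)).
  apply: ideal_sum => // i; rewrite (sinvM Hs).
  have Ia : Iseq s sinv H J (-1) (sinv (a i)) by exists (a i).
  have Ib : Iseq s sinv H J 1 (b i) by exists (b i).
  have := aC (-1) 1 _ _ w Ia Ib.
  rewrite (B1 _ Ib) (act0v _ _ Ia) addNr spowN1 => e; rewrite /Ann; exact: esym e.
- move=> B1; split => //.
  move=> x [n [a [b [Ha [Hb ->]]]]].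
  apply: mAnn; apply: ideal_sum => // i.
  have Ia : Iseq s sinv H J (-1) (sinv (a i)) by exists (a i).
  have Ib : Iseq s sinv H J 1 (b i) by exists (b i).
  have := aC 1 (-1) _ _ w Ib Ia.
  rewrite (B1 _ Ia) => e; rewrite (act0v _ _ Ib) addrN spow1 sinvK mulrC in e.
  exact: esym e.
Qed.
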